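(* There exist a formula $\phi$ of $\mathcal{D}(\mathsf{M})$, a structure $\mathfrak A$, a team $X$ over $\mathfrak A$ and a set of variables $V$ with $\mathrm{Fr}(\phi)\subseteq V\subseteq\mathrm{dom}(X)$ such that $\mathfrak A\models_{X\upharpoonright V}\phi$ but $\mathfrak A\not\models_X\phi$. That is, the truth of a $\mathcal{D}(\mathsf{M})$-formula in a team may depend on the values of variables that do not occur free in the formula.
   Context: All structures are finite. Dependence logic with majority, $\mathcal{D}(\mathsf{M})[\tau]$: formulas over a vocabulary $\tau$ in negation normal form, built from first-order literals (atomic formulas and negated atomic formulas), dependence atoms $=\!(t_1,\dots,t_n)$ ($t_i$ terms) and their negations $\neg=\!(t_1,\dots,t_n)$, using $\wedge$, $\vee$, $\exists x$, $\forall x$ and $\mathsf{M}x$. $\mathrm{Fr}(\phi)$ denotes the set of free variables, defined as in first-order logic ($\mathsf{M}x$ binds $x$), where the free variables of $=\!(t_1,\dots,t_n)$ are all variables occurring in $t_1,\dots,t_n$. A team $X$ over a structure $\mathfrak A$ with domain $A$ and with finite variable domain $\mathrm{dom}(X)$ is a set of assignments $s:\mathrm{dom}(X)\to A$. For $V\subseteq\mathrm{dom}(X)$, $X\upharpoonright V=\{s\upharpoonright V: s\in X\}$. For $F:X\to A$ let $X(F/x)=\{s(F(s)/x): s\in X\}$ and $X(A/x)=\{s(a/x): s\in X, a\in A\}$, where $s(a/x)$ agrees with $s$ except that it maps $x$ to $a$. Satisfaction $\mathfrak A\models_X\phi$ (for teams whose domain contains the free variables of $\phi$): for a first-order literal,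 every $s\in X$ satisfies it in the usual sense; $\mathfrak A\models_X =\!(t_1,\dots,t_n)$ iff any $s,s'\in X$ giving equal values to $t_1,\dots,t_{n-1}$ give equal values to $t_n$ ($=\!()$ is always true); $\mathfrak A\models_X\neg=\!(t_1,\dots,t_n)$ iff $X=\emptyset$; $\mathfrak A\models_X\psi\wedge\chi$ iff both hold; $\mathfrak A\models_X\psi\vee\chi$ iff $X=Y\cup Z$ with $\mathfrak A\models_Y\psi$ and $\mathfrak A\models_Z\chi$; $\mathfrak A\models_X\exists x\psi$ iff $\mathfrak A\models_{X(F/x)}\psi$ for some $F:X\to A$; $\mathfrak A\models_X\forall x\psi$ iff $\mathfrak A\models_{X(A/x)}\psi$; $\mathfrak A\models_X\mathsf{M}x\psi$ iff for at least $|A|^{|X|}/2$ many functions $F:X\to A$ we have $\mathfrak A\models_{X(F/x)}\psi$. *)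

(* Defs.v *)
From HB Require Import structures.
From mathcomp Require Import all_boot.
Set Implicit Arguments. Unset Strict Implicit. Unset Printing Implicit Defensive.

Record vocabulary := Vocabulary {
  fsym : Type; farity : fsym -> nat;
  rsym : Type; rarity : rsym -> nat }.

Inductive term (tau : vocabulary) : Type :=
  | tvar of nat
  | tapp (f : fsym tau) of seq (term tau).

Inductive atom (tau : vocabulary) : Type :=
  | AEq of term tau & term tau
  | ARel (r : rsym tau) of seq (term tau).

(* formulas of D(M) in negation normal form *)
Inductive formula (tau : vocabulary) : Type :=
  | FLit of bool & atom tau              (* FLit true a = a, FLit false a = ~ a *)
  | FDep of seq (term tau)
  | FNDep of seq (term tau)
  | FAnd of formula tau & formula tau
  | FOr of formula tau & formula tau
  | FEx of nat & formula tau
  | FAll of nat & formula tau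
  | FMaj of nat & formula tau.

Section Syntax.
Variable tau : vocabulary.

Fixpoint term_vars (t : term tau) : seq nat :=
  match t with
  | tvar x => [:: x]
  | tapp _ ts => (fix go (l : seq (term tau)) : seq nat :=
                   match l with [::] => [::] | u :: l' => term_vars u ++ go l' end) ts
  end.

Fixpoint wf_term (t : term tau) : bool :=
  match t with
  | tvar _ => true
  | tapp f ts => (size ts == farity f) &&
                 (fix go (l : seq (term tau)) : bool :=
                   match l with [::] => true | u :: l' => wf_term u && go l' end) ts
  end.

Definition atom_vars (a : atom tau) : seq nat :=
  match a with
  | AEq t1 t2 => term_vars t1 ++ term_vars t2
  | ARel _ ts => flatten (map term_vars ts)
  end.

Definition wf_atom (a : atom tau) : bool :=
  match a with
  | AEq t1 t2 => wf_term t1 && wf_term t2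
  | ARel r ts => (size ts == rarity r) && all wf_term ts
  end.

Fixpoint Fr (phi : formula tau) : seq nat :=
  match phi with
  | FLit _ a => atom_vars a
  | FDep ts | FNDep ts => flatten (map term_vars ts)
  | FAnd p q | FOr p q => Fr p ++ Fr q
  | FEx x p | FAll x p | FMaj x p => [seq y <- Fr p | y != x]
  end.

Fixpoint wf_formula (phi : formula tau) : bool :=
  match phi with
  | FLit _ a => wf_atom a
  | FDep ts | FNDep ts => all wf_term ts
  | FAnd p q | FOr p q => wf_formula p && wf_formula q
  | FEx _ p | FAll _ p | FMaj _ p => wf_formula p
  end.
End Syntax.

Record structure (tau : vocabulary) := Structure {
  carrier : finType;
  funi : forall f : fsym tau, (farity f).-tuple carrier -> carrier;
  reli : forall r : rsym tau, (rarity r).-tuple carrier -> bool }.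

Section Semantics.
Variable tau : vocabulary.
Variable M : structure tau.
Local Notation A := (carrier M).

(* An assignment with (finite) variable domain D (a list of variables read
   as a set) is a function from the elements of D to A. *)
Definition assign (D : seq nat) := {ffun seq_sub D -> A}.
Definition team (D : seq nat) := {set assign D}.

Definition lookup D (s : assign D) (x : nat) : option A := omap s (insub x).

Fixpoint eval D (s : assign D) (t : term tau) : option A :=
  match t with
  | tvar x => lookup s x
  | tapp f ts =>
      let vs := (fix go (l : seq (term tau)) : option (seq A) :=
                   match l with
                   | [::] => Some [::]
                   | u :: l' => match eval s u, go l' with
                                | Some a, Some r => Some (a :: r)
                                | _, _ => None end
                   end) ts in
      match vs with
      | Some v => omap (@funi tau M f) (insub v)
      | None => None
      end
  end.

Definition eval_seq D (s : assign D) (ts : seq (term tau)) : seq (option A) :=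
  map (eval s) ts.

Definition all_some (l : seq (option A)) : option (seq A) :=
  foldr (fun o r => match o, r with Some a, Some r' => Some (a :: r') | _, _ => None end)
        (Some [::]) l.

Definition atom_holds D (s : assign D) (a : atom tau) : bool :=
  match a with
  | AEq t1 t2 => match eval s t1, eval s t2 with
                 | Some a1, Some a2 => a1 == a2 | _, _ => false end
  | ARel r ts => match all_some (eval_seq s ts) with
                 | Some vs => match insub vs with
                              | Some t => @reli tau M r t | None => false end
                 | None => false
                 end
  end.

Definition upd D (x : nat) (a : A) (s : assign D) : assign (x :: D) :=
  [ffun y : seq_sub (x :: D) => if val y == x then a else odflt a (lookup s (val y))].

Definition supp D (X : team D) (x : nat)
    (F : {ffun {s : assign D | s \in X} -> A}) : team (x :: D) :=
  [set upd x (F s) (val s) | s : {s : assign D | s \in X}].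

Definition dupl D (X : team D) (x : nat) : team (x :: D) :=
  [set upd x a s | s in X, a in [set: A]].

Definition restr D (X : team D) (V : seq nat) : team V :=
  [set r : assign V | [exists s in X, [forall y : seq_sub V, lookup s (val y) == Some (r y)]]].

Definition dep_holds D (X : team D) (ts : seq (term tau)) : bool :=
  match ts with
  | [::] => true
  | _ => [forall s in X, forall s' in X,
            (eval_seq s (belast (head (tvar tau 0) ts) (behead ts)) ==
             eval_seq s' (belast (head (tvar tau 0) ts) (behead ts))) ==>
            (eval s (last (head (tvar tau 0) ts) (behead ts)) ==
             eval s' (last (head (tvar tau 0) ts) (behead ts)))]
  end.

Fixpoint sat (phi : formula tau) : forall D, team D -> bool :=
  match phi with
  | FLit true a => fun D X => [forall s in X, atom_holds s a]
  | FLit false a => fun D X => [forall s in X, ~~ atom_holds s a]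
  | FDep ts => fun D X => dep_holds X ts
  | FNDep _ => fun D X => X == set0
  | FAnd p q => fun D X => sat p X && sat q X
  | FOr p q => fun D X => [exists Y : team D, exists Z : team D,
                             (X == Y :|: Z) && sat p Y && sat q Z]
  | FEx x p => fun D X => [exists F : {ffun {s : assign D | s \in X} -> A},
                             sat p (supp x F)]
  | FAll x p => fun D X => sat p (dupl X x)
  | FMaj x p => fun D X =>
      #|A| ^ #|X| <= 2 * #|[set F : {ffun {s : assign D | s \in X} -> A} |
                            sat p (supp x F)]|
  end.
End Semantics.

(* Main.v *)
Require Import Defs.
From HB Require Import structures.
From mathcomp Require Import all_boot.
Set Implicit Arguments. Unset Strict Implicit.
Definition tau0 := Vocabulary (fun _ : void => 0) (fun _ : void => 0).
Definition M0 : structure tau0 :=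
  @Structure tau0 bool (fun f => match f with end) (fun r => match r with end).
Definition phi0 : formula tau0 := FMaj 0 (FLit true (AEq (tvar tau0 0) (tvar tau0 1))).
Definition psi0 : formula tau0 := (FLit true (AEq (tvar tau0 0) (tvar tau0 1))).

Lemma lookup_in (T : structure tau0) D (s : assign T D) x (h : x \in D) :
  lookup s x = Some (s (Sub x h)).
Proof. by rewrite /lookup insubT. Qed.

Lemma lookup_upd0 (T : structure tau0) D x a (s : assign T D) :
  lookup (upd x a s) x = Some a.
Proof. rewrite (lookup_in _ (mem_head x D)) /upd ffunE /= eqxx //. Qed.

Lemma lookup_upd1 (T : structure tau0) D x y a (s : assign T D) (h : y \in D) :
  y != x -> lookup (upd x a s) y = Some (s (Sub y h)).
Proof.
move=> ne. have h' : y \in x :: D by rewrite inE h orbT.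
rewrite (lookup_in _ h') /upd ffunE /= (negbTE ne) (lookup_in _ h) //.
Qed.

Lemma good_char D (X : team M0 D) (h : 1 \in D) (F : {ffun {s : assign M0 D | s \in X} -> bool}) :
  sat psi0 (supp 0 F) = [forall s, F s == val s (Sub 1 h)].
Proof.
apply/forallP/forallP => H.
- move=> s; have := H (@upd tau0 M0 D 0 (F s) (val s)).
  rewrite /supp (imset_f (fun s0 => @upd tau0 M0 D 0 (F s0) (val s0))) ?inE //= lookup_upd0 (lookup_upd1 _ _ h) //.
- move=> t; apply/implyP => /imsetP [s _ ->] /=.
  rewrite lookup_upd0 (lookup_upd1 _ _ h) //; exact: H.
Qed.

Lemma sat_phi0 D (X : team M0 D) (h : 1 \in D) : sat phi0 X = (#|X| <= 1).
Proof.
rewrite /= card_bool.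

have -> : [set F : {ffun {s : assign M0 D | s \in X} -> bool} | sat psi0 (supp 0 F)]
  = [set [ffun s : {s : assign M0 D | s \in X} => (val s : assign M0 D) (Sub 1 h : seq_sub D)]].
  apply/setP => F; rewrite !inE good_char; apply/forallP/eqP.
  - by move=> H; apply/ffunP => s; rewrite ffunE; apply/eqP.
  - by move=> -> s; rewrite ffunE.
rewrite cards1 muln1.
case: #|X| => [|[|n]] //=.
apply/negbTE; rewrite -ltnNge !expnS mulnA (leq_trans _ (leq_pmulr _ (expn_gt0 2 n))) //.
Qed.

Definition D0 := [:: 1; 2].
Definition s0 : assign M0 D0 := [ffun _ => false].
Definition s1 : assign M0 D0 := [ffun v => val v == 2].
Definition X0 : team M0 D0 := [set s0; s1].

Theorem mainTheorem4 :
  exists (tau : vocabulary) (phi : formula tau) (M : structure tau)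
         (D : seq nat) (X : team M D) (V : seq nat),
    0 < #|carrier M| /\ wf_formula phi /\
    {subset Fr phi <= V} /\ {subset V <= D} /\
    sat phi (restr X V) /\ ~~ sat phi X.
Proof.
exists tau0, phi0, M0, D0, X0, [:: 1].
split; first by rewrite /= card_bool.
split; first by [].
split; first by [].
split; first by move=> v; rewrite !inE => /eqP ->.
have h1 : 1 \in D0 by [].
have h2 : 2 \in D0 by [].
split.
- rewrite sat_phi0 //.
  have E : forall s, s \in X0 -> lookup s 1 = Some false.
    move=> t; rewrite !inE => /orP [] /eqP ->; rewrite (lookup_in _ h1) ffunE //.
  have K : forall r, r \in restr X0 [:: 1] -> r = [ffun _ => false].
    move=> r; rewrite /restr inE => /existsP [s /andP [Hs Hr]].
    apply/ffunP => y; rewrite ffunE.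
    have := forallP Hr y.
    case: y => y hy /=; have ey : y = 1 by move: (hy); rewrite inE => /eqP.
    subst y.
    by rewrite E // => /eqP [<-].
  apply/card_le1_eqP => r r' Hr Hr'; by rewrite (K _ Hr) (K _ Hr').
- rewrite sat_phi0 // cards2.
  suff -> : s0 != s1 by [].
  apply/negP => /eqP /ffunP /(_ (Sub 2 h2)); rewrite !ffunE //.
Qed.
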